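(* Let $U,V$ be Banach spaces, $L=L(V,U)$ the space of bounded linear maps with operator norm, $T>0$, $\alpha\in(0,1]$, $\beta\in(0,1]$, and let $F:[0,T]\times C^{\alpha}([0,T],U)\to L$ be non-anticipating and $(\alpha,\beta)$-Hölder continuous with constants $c_{\alpha,\beta},\tilde c_{\alpha,\beta}$. Fix $0\le t_0\le t_1\le T$. Then for every $Y,Z\in C^{\alpha}([0,t_1],U)$, $$\|F(\cdot,Y)\|_{\alpha\beta;[t_0,t_1]}\le c_{\alpha,\beta}\left(1+\|Y\|_{\alpha;[t_0,t_1]}^{\beta}\right).$$ Moreover, if $\|Y\|_{\alpha;[t_0,t_1]}\le R$ and $\|Z\|_{\alpha;[t_0,t_1]}\le R$, then for every $\theta\in(0,1)$, $$\|F(\cdot,Y)-F(\cdot,Z)\|_{\alpha\beta\theta;[t_0,t_1]}\le 2\,\tilde c_{\alpha,\beta}^{1-\theta}c_{\alpha,\beta}^{\theta}(1+R^{\beta})^{\theta}\left(\|Y-Z\|_{\alpha;[0,t_1]}+|Y_0-Z_0|\right)^{\beta(1-\theta)}.$$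
   Context: For a path $Z$ on an interval $I$, $\|Z\|_{\alpha;I}:=\sup_{s,t\in I,s\neq t}|Z_t-Z_s|/|t-s|^{\alpha}$; $C^{\alpha}(I,U)$ denotes paths with finite such seminorm. For $Y\in C([0,T],U)$ and $t\in[0,T]$ put $\mathcal{Y}_t(x):=Y_{t\wedge x}$. $F$ is non-anticipating if $F(t,Y)=F(t,\mathcal{Y}_t)$ for all $t,Y$; for a path $Y$ defined only on $[0,t_1]$ and $t\le t_1$, $F(t,Y)$ means $F(t,\bar Y)$ for any extension $\bar Y\in C^\alpha([0,T],U)$ (e.g. constant after $t_1$), which is well defined by non-anticipation. $F$ is $(\alpha,\beta)$-Hölder continuous if there are constants $c_{\alpha,\beta},\tilde c_{\alpha,\beta}\ge0$ such that for all $Y,\tilde Y\in C^{\alpha}([0,T],U)$ and $s,t\in[0,T]$: $|F(t,Y)-F(s,Y)|\le c_{\alpha,\beta}(1+\|Y\|_{\alpha;[s\wedge t,s\vee t]}^{\beta})|t-s|^{\alpha\beta}$ and $|F(s,Y)-F(s,\tilde Y)|\le\tilde c_{\alpha,\beta}(\|Y-\tilde Y\|_{\alpha;[0,s]}+|Y_0-\tilde Y_0|)^{\beta}$. *)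

(* Defs.v *)
From HB Require Import structures.
From mathcomp Require Import all_boot all_order all_algebra.
From mathcomp Require Import all_classical all_reals all_analysis.
Set Implicit Arguments. Unset Strict Implicit. Unset Printing Implicit Defensive.
Import Order.TTheory GRing.Theory Num.Theory.
Import numFieldNormedType.Exports.
Local Open Scope classical_set_scope.
Local Open Scope ring_scope.

Definition Icc {R : realType} (a b : R) : set R := [set x | a <= x <= b].

Definition opnormE {R : realType} {V U : normedModType R} (f : V -> U) : \bar R :=
  ereal_sup [set y : \bar R | exists v : V, `|v| <= 1 /\ y = (`|f v|)%:E].
Definition opnorm {R : realType} {V U : normedModType R} (f : V -> U) : R :=
  fine (opnormE f).

Definition bounded_linear {R : realType} {V U : normedModType R} (f : V -> U) : Prop :=
  (forall (a : R) (u v : V), f (a *: u + v) = a *: f u + f v) /\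
  exists M : R, forall v : V, `|f v| <= M * `|v|.

Definition hsemiE {R : realType} {X : zmodType} (N : X -> R) (a : R) (I : set R)
    (Z : R -> X) : \bar R :=
  ereal_sup [set y : \bar R | exists s t : R,
    I s /\ I t /\ s <> t /\ y = (N (Z t - Z s) / `|t - s| `^ a)%:E].

Definition holder {R : realType} {X : zmodType} (N : X -> R) (a : R) (I : set R)
    (Z : R -> X) : Prop := (hsemiE N a I Z < +oo)%E.

(* real-valued seminorm (meaningful when finite; fine(-oo) = 0 on degenerate intervals) *)
Definition hsemi {R : realType} {X : zmodType} (N : X -> R) (a : R) (I : set R)
    (Z : R -> X) : R := fine (hsemiE N a I Z).

Definition stopped {R : realType} {X : Type} (t : R) (Y : R -> X) : R -> X :=
  fun x => Y (Num.min t x).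

(* Main.v *)
Require Import Defs.
From HB Require Import structures.
From mathcomp Require Import all_boot all_order all_algebra.
From mathcomp Require Import all_classical all_reals all_analysis.
From mathcomp Require Import lra ring.
Import Order.TTheory GRing.Theory Num.Theory.
Import numFieldNormedType.Exports.
Local Open Scope classical_set_scope.
Local Open Scope ring_scope.

Lemma subrACB (X : zmodType) (a b c d : X) : (a - b) - (c - d) = (a - c) - (b - d).
Proof. by rewrite !opprD !opprK !addrA (addrAC a (- b)). Qed.

Section H.
Variable R : realType.

Lemma fine_le_pos (e : \bar R) (x : R) : (e <= x%:E)%E -> 0 <= x -> fine e <= x.
Proof. by case: e => [r|//|//] /=; rewrite ?lee_fin. Qed.

Lemma hsemiE_le {X : zmodType} (N : X -> R) a I (Z : R -> X) (M : R) :
  (forall s t, I s -> I t -> s <> t -> N (Z t - Z s) / `|t - s| `^ a <= M) ->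
  (hsemiE N a I Z <= M%:E)%E.
Proof.
move=> H; apply: ge_ereal_sup => y [s [t [Is [It [st ->]]]]].
by rewrite lee_fin; apply: H.
Qed.

Lemma hsemi_ge0 {X : zmodType} (N : X -> R) a I (Z : R -> X) :
  (forall x, 0 <= N x) -> 0 <= hsemi N a I Z.
Proof.
move=> N0; rewrite /hsemi.
case E: (hsemiE N a I Z) => [r| |] //=.
have [[s [t [Is [It st]]]]|nE] := pselect (exists s t, I s /\ I t /\ s <> t).
  have : ((N (Z t - Z s) / `|t - s| `^ a)%:E <= hsemiE N a I Z)%E.
    by apply: ereal_sup_ubound; exists s, t.
  rewrite E lee_fin; apply: le_trans; apply: divr_ge0 => //; exact: powR_ge0.
have : (hsemiE N a I Z <= (r - 1)%:E)%E.
  apply: hsemiE_le => s t Is It st; exfalso; apply: nE; by exists s, t.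
rewrite E lee_fin => H; exfalso; move: H; lra.
Qed.

Lemma hsemi_point {X : zmodType} (N : X -> R) a I (Z : R -> X) s t :
  (hsemiE N a I Z < +oo)%E -> I s -> I t -> s <> t ->
  N (Z t - Z s) / `|t - s| `^ a <= hsemi N a I Z.
Proof.
move=> fin Is It st.
have H : ((N (Z t - Z s) / `|t - s| `^ a)%:E <= hsemiE N a I Z)%E.
  by apply: ereal_sup_ubound; exists s, t.
move: fin H; rewrite /hsemi; case: (hsemiE N a I Z) => [r| |] //=.
Qed.

Lemma hsemi_mono {X : zmodType} (N : X -> R) a (I J : set R) (Z Z' : R -> X) :
  (forall x, 0 <= N x) -> I `<=` J -> (forall x, I x -> Z x = Z' x) ->
  (hsemiE N a J Z' < +oo)%E ->
  hsemi N a I Z <= hsemi N a J Z'.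
Proof.
move=> N0 IJ ZZ fin; apply: fine_le_pos; last exact: hsemi_ge0.
apply: hsemiE_le => s t Is It st.
rewrite !ZZ //; apply: hsemi_point => //; exact: IJ.
Qed.


Lemma min_lip (t1 s t : R) : `|Num.min t1 t - Num.min t1 s| <= `|t - s|.
Proof.
rewrite /Num.min ler_norml; case: (ltP t1 t) => ?; case: (ltP t1 s) => ?; case: (lerP s t) => ?; lra.
Qed.

Lemma holder_stopped (X : normedModType R) a (t1 T : R) (Y : R -> X) :
  0 < a -> 0 <= t1 -> holder Num.norm a (Icc 0 t1) Y ->
  holder Num.norm a (Icc 0 T) (stopped t1 Y).
Proof.
move=> a0 t10 hY; rewrite /holder.
apply: (le_lt_trans (y := (hsemi Num.norm a (Icc 0 t1) Y)%:E)); last exact: ltry.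
apply: hsemiE_le => s t Is It st; rewrite /stopped.
have H0 := @hsemi_ge0 _ Num.norm a (Icc 0 t1) Y (@normr_ge0 _ _).
have tsp : 0 < `|t - s| by rewrite normr_gt0 subr_eq0; apply/eqP => e; apply: st.
have tsa : 0 < `|t - s| `^ a by apply: powR_gt0.
rewrite ler_pdivrMr //.
have [e|ne] := eqVneq (Num.min t1 t) (Num.min t1 s).
  by rewrite e subrr normr0; apply: mulr_ge0 => //; exact: powR_ge0.
have Im : forall x, Icc 0 T x -> Icc 0 t1 (Num.min t1 x).
  move=> x; rewrite /Icc /= => /andP[x0 _]; rewrite ge_min lexx orTb andbT.
  by rewrite le_min t10 x0.
have ne' : Num.min t1 s <> Num.min t1 t by move=> e; move: ne; rewrite e eqxx.
have H := @hsemi_point X Num.norm a (Icc 0 t1) Y _ _ hY (Im _ Is) (Im _ It) ne'.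
have mp : 0 < `|Num.min t1 t - Num.min t1 s| by rewrite normr_gt0 subr_eq0.
rewrite ler_pdivrMr ?powR_gt0 // in H.
apply: (le_trans H); apply: ler_wpM2l => //.
apply: (ge0_ler_powR (ltW a0)); rewrite ?nnegrE ?normr_ge0 //; apply: min_lip.
Qed.

Lemma holder_sub (X : normedModType R) a I (Y Z : R -> X) :
  holder Num.norm a I Y -> holder Num.norm a I Z ->
  (hsemiE Num.norm a I (Y - Z)%R <=
     (hsemi Num.norm a I Y + hsemi Num.norm a I Z)%:E)%E.
Proof.
move=> hY hZ; apply: hsemiE_le => s t Is It st.
have e : (Y - Z) t - (Y - Z) s = (Y t - Y s) - (Z t - Z s).
  change ((Y t - Z t) - (Y s - Z s) = Y t - Y s - (Z t - Z s)).
  by rewrite !opprD !opprK !addrA (addrAC (Y t) (- Z t)).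
rewrite e; apply: le_trans; first by apply: ler_wpM2r; [rewrite invr_ge0 powR_ge0 // | exact: ler_normB].
by rewrite mulrDl; apply: lerD; apply: hsemi_point.
Qed.


Section Op.
Variables (V U : normedModType R).

Definition bnd (f : V -> U) := exists M : R, forall v : V, `|f v| <= M * `|v|.

Lemma opnorm_ge0 (f : V -> U) : 0 <= opnorm f.
Proof.
rewrite /opnorm; case E: (opnormE f) => [r| |] //=.
have : ((`|f 0|)%:E <= opnormE f)%E.
  by apply: ereal_sup_ubound; exists 0; rewrite normr0 ler01.
rewrite E lee_fin; apply: le_trans; exact: normr_ge0.
Qed.

Lemma opnormE_fin (f : V -> U) : bnd f -> (opnormE f < +oo)%E.
Proof.
move=> [M HM]; apply: (le_lt_trans (y := (Num.max M 0)%:E)); last exact: ltry.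
apply: ge_ereal_sup => y [v [v1 ->]]; rewrite lee_fin.
apply: (le_trans (HM v)).
have Mm : M <= Num.max M 0 by rewrite le_max lexx.
have m0 : 0 <= Num.max M 0 by rewrite le_max lexx orbT.
apply: (le_trans (y := Num.max M 0 * `|v|)).
  by apply: ler_wpM2r => //; exact: normr_ge0.
by rewrite -[X in _ <= X]mulr1; apply: ler_wpM2l.
Qed.

Lemma opnorm_pt (f : V -> U) v : bnd f -> `|v| <= 1 -> `|f v| <= opnorm f.
Proof.
move=> /opnormE_fin fin v1.
have H : ((`|f v|)%:E <= opnormE f)%E by apply: ereal_sup_ubound; exists v.
move: fin H; rewrite /opnorm; case: (opnormE f) => [r| |] //=.
Qed.

Lemma opnorm_tri (f g h : V -> U) : bnd f -> bnd g ->
  (forall v, `|h v| <= `|f v| + `|g v|) -> opnorm h <= opnorm f + opnorm g.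
Proof.
move=> bf bg H; apply: fine_le_pos; last by apply: addr_ge0; exact: opnorm_ge0.
apply: ge_ereal_sup => y [v [v1 ->]]; rewrite lee_fin.
by apply: (le_trans (H v)); apply: lerD; apply: opnorm_pt.
Qed.

Lemma bnd_sub (f g : V -> U) : bnd f -> bnd g -> bnd (f - g).
Proof.
move=> [M1 H1] [M2 H2]; exists (M1 + M2) => v.
change (`|f v - g v| <= (M1 + M2) * `|v|).
by rewrite mulrDl; apply: (le_trans (ler_normB _ _)); apply: lerD.
Qed.

End Op.

Lemma interp (x c L ct d h a b th : R) : 0 <= x -> 0 <= c -> 0 <= L -> 0 <= ct ->
  0 <= d -> 0 < h -> 0 < th < 1 ->
  x <= 2 * c * L * h `^ a -> x <= 2 * ct * d `^ b ->
  x / h `^ (a * th) <= 2 * ct `^ (1 - th) * c `^ th * L `^ th * d `^ (b * (1 - th)).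
Proof.
move=> x0 c0 L0 ct0 d0 h0 /andP[th0 th1] xA xB.
have ex : x = x `^ th * x `^ (1 - th).
  rewrite -powRD; last by rewrite (addrC th) subrK oner_eq0.
  by rewrite (addrC th) subrK powRr1.
have e2 : 2 = (2:R) `^ th * (2:R) `^ (1 - th).
  rewrite -powRD; last by rewrite (addrC th) subrK oner_eq0.
  by rewrite (addrC th) subrK powRr1.
have nn : forall y : R, 0 <= y -> y \in Num.nneg by move=> y; rewrite nnegrE.
have p0 : forall y z : R, 0 <= y `^ z by move=> y z; exact: powR_ge0.
have A1 : x `^ th <= 2 `^ th * c `^ th * L `^ th * h `^ (a * th).
  rewrite powRrM -!powRM ?mulr_ge0 ?p0 //.
  apply: (ge0_ler_powR (ltW th0)); rewrite ?nn ?mulr_ge0 ?p0 //.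
have B1 : x `^ (1 - th) <= 2 `^ (1 - th) * ct `^ (1 - th) * d `^ (b * (1 - th)).
  rewrite powRrM -!powRM ?mulr_ge0 ?p0 //.
  have t1 : 0 <= 1 - th by rewrite subr_ge0 ltW.
  apply: (ge0_ler_powR t1); rewrite ?nn ?mulr_ge0 ?p0 //.
have H0 : 0 < h `^ (a * th) by apply: powR_gt0.
rewrite ler_pdivrMr // ex.
apply: (le_trans (ler_pM _ _ A1 B1)); rewrite ?p0 //.
rewrite [in X in _ <= X]e2.
rewrite le_eqVlt; apply/orP; left; apply/eqP; ring.
Qed.

Lemma hsemiE_sub {X : zmodType} (N : X -> R) a (I J : set R) (Z : R -> X) :
  I `<=` J -> (hsemiE N a I Z <= hsemiE N a J Z)%E.
Proof.
move=> IJ; apply: ereal_sup_le => y [s [t [Is [It [st ->]]]]].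
by exists s, t; split; [exact: IJ | split; [exact: IJ | split]].
Qed.

End H.

Arguments bnd {R V U}.
Arguments opnorm_tri {R V U} [f g h].
Arguments bnd_sub {R V U} [f g].

Theorem proposition4p10 (R : realType) (U V : completeNormedModType R)
  (T alpha beta c ct : R)
  (F : R -> (R -> U) -> (V -> U))
  (hT : 0 < T) (halpha : 0 < alpha <= 1) (hbeta : 0 < beta <= 1)
  (hc : 0 <= c) (hct : 0 <= ct)
  (* F is a map on [0,T] x C^alpha([0,T],U): it only sees paths on [0,T] *)
  (Fdom : forall (t : R) (Y Y' : R -> U),
     (forall x, 0 <= x <= T -> Y x = Y' x) -> F t Y = F t Y')
  (* F takes values in L(V,U) *)
  (Flin : forall (t : R) (Y : R -> U), 0 <= t <= T ->
     holder Num.norm alpha (Icc 0 T) Y -> bounded_linear (F t Y))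
  (* non-anticipating *)
  (Fna : forall (t : R) (Y : R -> U), 0 <= t <= T ->
     holder Num.norm alpha (Icc 0 T) Y -> F t Y = F t (stopped t Y))
  (* (alpha,beta)-Hoelder continuity *)
  (FH1 : forall (Y : R -> U) (s t : R), holder Num.norm alpha (Icc 0 T) Y ->
     0 <= s <= T -> 0 <= t <= T ->
     opnorm (F t Y - F s Y) <=
       c * (1 + hsemi Num.norm alpha (Icc (Num.min s t) (Num.max s t)) Y `^ beta)
         * `|t - s| `^ (alpha * beta))
  (FH2 : forall (Y Y' : R -> U) (s : R), holder Num.norm alpha (Icc 0 T) Y ->
     holder Num.norm alpha (Icc 0 T) Y' -> 0 <= s <= T ->
     opnorm (F s Y - F s Y') <=
       ct * (hsemi Num.norm alpha (Icc 0 s) (Y - Y') + `|Y 0 - Y' 0|) `^ beta)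
  (t0 t1 : R) (ht01 : 0 <= t0 <= t1) (ht1T : t1 <= T)
  (Y Z : R -> U)
  (hY : holder Num.norm alpha (Icc 0 t1) Y) (hZ : holder Num.norm alpha (Icc 0 t1) Z) :
  (hsemiE opnorm (alpha * beta) (Icc t0 t1) (fun t => F t (stopped t1 Y))
     <= (c * (1 + hsemi Num.norm alpha (Icc t0 t1) Y `^ beta))%:E)%E
  /\
  (forall Rb theta : R,
     hsemi Num.norm alpha (Icc t0 t1) Y <= Rb ->
     hsemi Num.norm alpha (Icc t0 t1) Z <= Rb ->
     0 < theta < 1 ->
     (hsemiE opnorm (alpha * beta * theta) (Icc t0 t1)
        (fun t => (F t (stopped t1 Y) - F t (stopped t1 Z))%R)
      <= (2 * ct `^ (1 - theta) * c `^ theta * (1 + Rb `^ beta) `^ theta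
          * (hsemi Num.norm alpha (Icc 0 t1) (Y - Z) + `|Y 0 - Z 0|)
              `^ (beta * (1 - theta)))%:E)%E).
Proof.
move: halpha hbeta => /andP[a0 a1] /andP[b0 b1].
move: ht01 => /andP[t00 t01].
have t10 : 0 <= t1 by apply: le_trans t01.
have NN : forall x : U, 0 <= `|x| by move=> x; exact: normr_ge0.
have ON : forall f : V -> U, 0 <= opnorm f by move=> f; exact: opnorm_ge0.
have inT : forall u, Icc t0 t1 u -> 0 <= u <= T.
  by move=> u; rewrite /Icc /= => /andP[h1 h2]; rewrite (le_trans t00 h1) (le_trans h2 ht1T).
have Fb : forall u W, 0 <= u <= T -> holder Num.norm alpha (Icc 0 T) W -> bnd (F u W).
  by move=> u W hu hW; exact: (Flin u W hu hW).2.
have hs : forall W : R -> U, holder Num.norm alpha (Icc 0 t1) W ->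
    holder Num.norm alpha (Icc 0 T) (stopped t1 W).
  by move=> W hW; exact: (@holder_stopped R U alpha t1 T W a0 t10 hW).
have P1 : forall W : R -> U, holder Num.norm alpha (Icc 0 t1) W -> forall s t,
    Icc t0 t1 s -> Icc t0 t1 t ->
    opnorm (F t (stopped t1 W) - F s (stopped t1 W)) <=
    c * (1 + hsemi Num.norm alpha (Icc t0 t1) W `^ beta) * `|t - s| `^ (alpha * beta).
  move=> W hW s t Is It.
  apply: (le_trans (FH1 (stopped t1 W) s t (hs W hW) (inT s Is) (inT t It))).
  apply: ler_wpM2r; first exact: powR_ge0.
  apply: ler_wpM2l => //; rewrite lerD2l.
  apply: (ge0_ler_powR (ltW b0)); rewrite ?nnegrE ?hsemi_ge0 //.
  apply: hsemi_mono => //.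
  - move: Is It; rewrite /Icc /= => /andP[s0 s1] /andP[u0 u1] x /andP[x0 x1].
    apply/andP; split; [apply: le_trans x0; rewrite le_min s0 u0 |
      apply: le_trans x1 _; rewrite ge_max s1 u1] => //.
  - move: Is It; rewrite /Icc /= => /andP[s0 s1] /andP[u0 u1] x /andP[x0 x1].
    rewrite /stopped min_r //; apply: (le_trans x1); by rewrite ge_max s1 u1.
  - apply: le_lt_trans hW; apply: hsemiE_sub => x; rewrite /Icc /= => /andP[x0 x1].
    by rewrite x1 (le_trans t00 x0).
split.
  apply: hsemiE_le => s t Is It st.
  have tsp : 0 < `|t - s| by rewrite normr_gt0 subr_eq0; apply/eqP => e; apply: st.
  rewrite ler_pdivrMr ?powR_gt0 //; exact: P1.
move=> Rb th hRY hRZ hth.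
apply: hsemiE_le => s t Is It st.
have tsp : 0 < `|t - s| by rewrite normr_gt0 subr_eq0; apply/eqP => e; apply: st.
set Ys := stopped t1 Y; set Zs := stopped t1 Z.
have hYs : holder Num.norm alpha (Icc 0 T) Ys by exact: hs.
have hZs : holder Num.norm alpha (Icc 0 T) Zs by exact: hs.
set d := hsemi Num.norm alpha (Icc 0 t1) (Y - Z) + `|Y 0 - Z 0|.
have d0 : 0 <= d by apply: addr_ge0; [exact: hsemi_ge0 | exact: normr_ge0].
have Rb0 : 0 <= Rb by apply: le_trans hRY; exact: hsemi_ge0.
have L0 : 0 <= 1 + Rb `^ beta by apply: addr_ge0; [exact: ler01 | exact: powR_ge0].
have PB : forall u, Icc t0 t1 u -> opnorm (F u Ys - F u Zs) <= ct * d `^ beta.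
  move=> u Iu; apply: (le_trans (FH2 Ys Zs u hYs hZs (inT u Iu))).
  apply: ler_wpM2l => //.
  apply: (ge0_ler_powR (ltW b0)); rewrite ?nnegrE ?addr_ge0 ?hsemi_ge0 //.
  have e0 : Ys 0 - Zs 0 = Y 0 - Z 0 by rewrite /Ys /Zs /stopped min_r.
  rewrite e0 lerD2r; apply: hsemi_mono => //.
  - move: Iu; rewrite /Icc /= => /andP[u0 u1] x /andP[x0 x1].
    by apply/andP; split; [| exact: le_trans x1 u1].
  - move: Iu; rewrite /Icc /= => /andP[u0 u1] x /andP[x0 x1].
    change (Y (Num.min t1 x) - Z (Num.min t1 x) = Y x - Z x).
    by rewrite min_r // (le_trans x1 u1).
  - apply: le_lt_trans; first exact: holder_sub.
    exact: ltry.
have PA : forall W : R -> U, holder Num.norm alpha (Icc 0 t1) W ->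
    hsemi Num.norm alpha (Icc t0 t1) W <= Rb ->
    opnorm (F t (stopped t1 W) - F s (stopped t1 W)) <=
    c * (1 + Rb `^ beta) * `|t - s| `^ (alpha * beta).
  move=> W hW hR; apply: (le_trans (P1 W hW s t Is It)).
  apply: ler_wpM2r; first exact: powR_ge0.
  apply: ler_wpM2l => //; rewrite lerD2l.
  by apply: (ge0_ler_powR (ltW b0)); rewrite ?nnegrE ?hsemi_ge0.
have bt := Fb t _ (inT t It).
have bs := Fb s _ (inT s Is).
change (opnorm ((F t Ys - F t Zs) - (F s Ys - F s Zs)) / `|t - s| `^ (alpha * beta * th) <=
  2 * ct `^ (1 - th) * c `^ th * (1 + Rb `^ beta) `^ th * d `^ (beta * (1 - th))).
apply: interp => //.
- apply: (le_trans (opnorm_tri (f := F t Ys - F s Ys) (g := F t Zs - F s Zs) _ _ _)).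
  + exact: bnd_sub (bt _ hYs) (bs _ hYs).
  + exact: bnd_sub (bt _ hZs) (bs _ hZs).
  + move=> v.
    change (`|(F t Ys v - F t Zs v) - (F s Ys v - F s Zs v)| <=
      `|F t Ys v - F s Ys v| + `|F t Zs v - F s Zs v|).
    rewrite subrACB; exact: ler_normB.
  apply: le_trans; first exact: lerD (PA Y hY hRY) (PA Z hZ hRZ).
  by rewrite le_eqVlt; apply/orP; left; apply/eqP; ring.
- apply: (le_trans (opnorm_tri (f := F t Ys - F t Zs) (g := F s Ys - F s Zs) _ _ _)).
  + exact: bnd_sub (bt _ hYs) (bt _ hZs).
  + exact: bnd_sub (bs _ hYs) (bs _ hZs).
  + move=> v.
    change (`|(F t Ys v - F t Zs v) - (F s Ys v - F s Zs v)| <=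
      `|F t Ys v - F t Zs v| + `|F s Ys v - F s Zs v|).
    exact: ler_normB.
  apply: le_trans; first exact: lerD (PB t It) (PB s Is).
  by rewrite le_eqVlt; apply/orP; left; apply/eqP; ring.
Qed.
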